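(* Let $\sim$ denote either $\cong$ or $\simeq$, and let $A,B,C,D$ be type expressions. (1) $\bullet A\sim\bullet B$ if and only if $A\sim B$. (2) $A\to B\sim C\to D$ if and only if either (a) $A\sim C$ and $B\sim D$, or (b) $B\sim D\sim\top$.
   Context: Type expressions: fix a countably infinite set of type variables $X,Y,Z,\dots$. Pseudo type expressions are generated by $A::=X\mid A\to A\mid \bullet A\mid \mu X.A$ ($\mu$ binds $X$; $\alpha$-convertible expressions are identified; $\to$ associates to the right; $\bullet$ binds tighter than $\to$, which binds tighter than $\mu$). $A[B/X]$ denotes capture-avoiding substitution. $\top$ abbreviates $\mu X.\bullet X$, and $\bullet^n A$ denotes $A$ prefixed by $n$ copies of $\bullet$. The tail $t(A)$ is defined by $t(X)=X$, $t(A\to B)=t(B)$, $t(\bullet A)=\bullet t(A)$, $t(\mu X.A)=\mu X.t(A)$; it always has the form $\bullet^{m_0}\mu X_1.\bullet^{m_1}\mu X_2.\cdots\mu X_n.\bullet^{m_n}Y$. $A$ is a $\top$-variant iff $Y=X_i$ for some $1\le i\le n$ with $X_i\notin\{X_{i+1},\dots,X_n\}$ and $m_i+\dots+m_n\ge 1$. $A$ is proper in $X$ iff: a variable $Y$ is proper in $X$ iff $Y\neq X$; $\bullet A$ is always proper in $X$; $A\to B$ is proper in $X$ iff both $A,B$ are proper in $X$ or $B$ is a $\top$-variant; for $Y\ne X$, $\mu Y.A$ is proper in $X$ iff $A$ is proper in $X$ or $\mu Y.A$ is a $\top$-variant. Type expressions are the least set of pseudo type expressions containing all type variables, closed under $\to$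 and $\bullet$, and containing $\mu X.A$ whenever it contains $A$ and $A$ is proper in $X$. Equality: $\cong$ is the least relation on type expressions such that: $A\cong A$; $A\cong B$ implies $B\cong A$; $A\cong B$ and $B\cong C$ imply $A\cong C$; $A\cong B$ implies $\bullet A\cong\bullet B$; $A\cong C$ and $B\cong D$ imply $A\to B\cong C\to D$; $A\to\top\cong\top$; $\mu X.A\cong A[\mu X.A/X]$; and if $A\cong C[A/X]$ with $C$ proper in $X$, then $A\cong\mu X.C$. $\simeq$ is the least relation satisfying the same closure conditions and additionally $\bullet(A\to B)\simeq\bullet A\to\bullet B$. *)

(* Defs.v *)
(* Type expressions in pure de Bruijn representation:
   alpha-equivalent pseudo type expressions are identified automatically. *)
From Stdlib Require Import Arith.

Inductive ty : Type :=
| Var : nat -> ty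
| Arr : ty -> ty -> ty
| Later : ty -> ty
| Mu : ty -> ty.       (* Mu A : binds index 0 in A *)

Fixpoint lift (k : nat) (A : ty) : ty :=
  match A with
  | Var n => if n <? k then Var n else Var (S n)
  | Arr a b => Arr (lift k a) (lift k b)
  | Later a => Later (lift k a)
  | Mu a => Mu (lift (S k) a)
  end.

(* subst k B A : capture-avoiding substitution of B for index k in A
   (B given relative to the context at depth k); indices > k decrease. *)
Fixpoint subst (k : nat) (B : ty) (A : ty) : ty :=
  match A with
  | Var n => if n =? k then B else if n <? k then Var n else Var (pred n)
  | Arr a b => Arr (subst k B a) (subst k B b)
  | Later a => Later (subst k B a)
  | Mu a => Mu (subst (S k) (lift 0 B) a)
  end.

(* C[B/X] where C is the body of a binder for X (index 0). *)
Definition subst0 (C B : ty) : ty := subst 0 B C.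

Definition top : ty := Mu (Later (Var 0)).

(* Status of the tail variable, computed bottom-up along the tail
   t(A) (the tail ignores the left sides of arrows):
   - Free j g : tail variable is index j relative to the current position,
                g = a Later occurs between the current position and it;
   - Resolved g : the tail variable is bound by a Mu on the tail, and g
                  says whether a Later occurs between that (innermost
                  binding) Mu and the variable. *)
Inductive tstat := Free (j : nat) (g : bool) | Resolved (g : bool).

Fixpoint tail_status (A : ty) : tstat :=
  match A with
  | Var j => Free j false
  | Arr _ b => tail_status b
  | Later a => match tail_status a with
               | Free j _ => Free j true
               | r => r
               end
  | Mu a => match tail_status a with
            | Free 0 g => Resolved g
            | Free (S j) g => Free j g
            | r => r
            end
  end.

(* A is a top-variant: tail is  .^{m0} mu X1 ... mu Xn .^{mn} Y with
   Y = X_i the innermost binder of that name and m_i + ... + m_n >= 1. *)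
Definition top_variant (A : ty) : Prop := tail_status A = Resolved true.

Fixpoint proper (k : nat) (A : ty) : Prop :=
  match A with
  | Var j => j <> k
  | Later _ => True
  | Arr a b => (proper k a /\ proper k b) \/ top_variant b
  | Mu a => proper (S k) a \/ top_variant (Mu a)
  end.

Inductive wf : ty -> Prop :=
| wf_var n : wf (Var n)
| wf_arr a b : wf a -> wf b -> wf (Arr a b)
| wf_later a : wf a -> wf (Later a)
| wf_mu a : wf a -> proper 0 a -> wf (Mu a).

(* teq false = the relation \cong ; teq true = the relation \simeq
   (which additionally has  later(A -> B) ~ later A -> later B). *)
Inductive teq (dist : bool) : ty -> ty -> Prop :=
| teq_refl A : wf A -> teq dist A A
| teq_sym A B : teq dist A B -> teq dist B A
| teq_trans A B C : teq dist A B -> teq dist B C -> teq dist A C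
| teq_later A B : teq dist A B -> teq dist (Later A) (Later B)
| teq_arr A B C D : teq dist A C -> teq dist B D ->
    teq dist (Arr A B) (Arr C D)
| teq_arr_top A : wf A -> teq dist (Arr A top) top
| teq_unfold A : wf (Mu A) -> teq dist (Mu A) (subst0 A (Mu A))
| teq_fix A C : wf A -> wf C -> proper 0 C ->
    teq dist A (subst0 C A) -> teq dist A (Mu C)
| teq_dist A B : dist = true -> wf A -> wf B ->
    teq dist (Later (Arr A B)) (Arr (Later A) (Later B)).

(* Main.v *)
Require Import Defs.
From Stdlib Require Import Arith Lia.


Ltac nsimp := repeat match goal with
  | |- context [?a =? ?b] => destruct (Nat.eqb_spec a b)
  | |- context [?a <? ?b] => destruct (Nat.ltb_spec a b)
  end.

Lemma lift_lift : forall A j k, j <= k -> lift (S k) (lift j A) = lift j (lift k A).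
Proof.
  induction A; intros j k H; simpl.
  - nsimp; cbn [lift subst]; nsimp; try reflexivity; try lia.
  - rewrite IHA1, IHA2; auto.
  - rewrite IHA; auto.
  - rewrite IHA; auto; lia.
Qed.

Lemma subst_lift : forall A k U, subst k U (lift k A) = A.
Proof.
  induction A; intros k S0; simpl.
  - nsimp; cbn [lift subst]; nsimp; try reflexivity; try lia; f_equal; lia.
  - rewrite IHA1, IHA2; auto.
  - rewrite IHA; auto.
  - rewrite IHA; auto.
Qed.

Lemma lift_subst1 : forall A j k U, j <= k ->
  lift j (subst k U A) = subst (S k) (lift j U) (lift j A).
Proof.
  induction A; intros j k S0 H; simpl.
  - nsimp; cbn [lift subst]; nsimp; try reflexivity; try lia; f_equal; lia.
  - rewrite IHA1, IHA2; auto.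
  - rewrite IHA; auto.
  - rewrite IHA by lia. rewrite (lift_lift S0 0 j) by lia. auto.
Qed.

Lemma lift_subst2 : forall A j k U, k <= j ->
  lift j (subst k U A) = subst k (lift j U) (lift (S j) A).
Proof.
  induction A; intros j k S0 H; simpl.
  - nsimp; cbn [lift subst]; nsimp; try reflexivity; try lia; f_equal; lia.
  - rewrite IHA1, IHA2; auto.
  - rewrite IHA; auto.
  - rewrite IHA by lia. rewrite (lift_lift S0 0 j) by lia. auto.
Qed.

Lemma subst_subst : forall A i j U T, j <= i ->
  subst i U (subst j T A) = subst j (subst i U T) (subst (S i) (lift j U) A).
Proof.
  induction A; intros i j S0 T H; simpl.
  - nsimp; cbn [lift subst]; nsimp; try reflexivity; try lia;
      try (rewrite subst_lift; reflexivity); f_equal; lia.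
  - rewrite IHA1, IHA2; auto.
  - rewrite IHA; auto.
  - rewrite IHA by lia. rewrite (lift_lift S0 0 j) by lia.
    rewrite (lift_subst1 T 0 i) by lia. auto.
Qed.

Lemma subst_unfold : forall c k U,
  subst k U (subst0 c (Mu c)) =
  subst0 (subst (S k) (lift 0 U) c) (Mu (subst (S k) (lift 0 U) c)).
Proof.
  intros. unfold subst0. rewrite subst_subst by lia. reflexivity.
Qed.

Lemma lift_unfold : forall c k,
  lift k (subst0 c (Mu c)) = subst0 (lift (S k) c) (Mu (lift (S k) c)).
Proof.
  intros. unfold subst0. rewrite lift_subst2 by lia. reflexivity.
Qed.

Lemma subst_top : forall k U, subst k U top = top.
Proof. reflexivity. Qed.
Lemma lift_top : forall k, lift k top = top.
Proof. reflexivity. Qed.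




Lemma ts_lift : forall A k,
  (forall g, tail_status A = Resolved g -> tail_status (lift k A) = Resolved g) /\
  (forall j g, tail_status A = Free j g -> j < k -> tail_status (lift k A) = Free j g).
Proof.
  induction A; intros k; simpl.
  - split; intros; try discriminate. inversion H; subst.
    nsimp; simpl; try reflexivity; lia.
  - apply IHA2.
  - destruct (IHA k) as [H1 H2].
    destruct (tail_status A) as [j g|g] eqn:E.
    + split; intros; try discriminate. inversion H; subst.
      rewrite (H2 j0 g) by auto. reflexivity.
    + split; intros; try discriminate. rewrite (H1 g) by auto. auto.
  - destruct (IHA (S k)) as [H1 H2].
    destruct (tail_status A) as [[|j] g|g] eqn:E.
    + split; intros; try discriminate. inversion H; subst.
      rewrite (H2 0 g0) by (auto; lia). reflexivity.
    + split; intros; try discriminate. inversion H; subst.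
      rewrite (H2 (S j0) g0) by (auto; lia). reflexivity.
    + split; intros; try discriminate. rewrite (H1 g) by auto. auto.
Qed.

Lemma ts_subst : forall A k U,
  (forall g, tail_status A = Resolved g -> tail_status (subst k U A) = Resolved g) /\
  (forall j g, tail_status A = Free j g -> j < k -> tail_status (subst k U A) = Free j g).
Proof.
  induction A; intros k U; simpl.
  - split; intros; try discriminate. inversion H; subst.
    nsimp; simpl; try reflexivity; lia.
  - apply IHA2.
  - destruct (IHA k U) as [H1 H2].
    destruct (tail_status A) as [j g|g] eqn:E.
    + split; intros; try discriminate. inversion H; subst.
      rewrite (H2 j0 g) by auto. reflexivity.
    + split; intros; try discriminate. rewrite (H1 g) by auto. auto.
  - destruct (IHA (S k) (lift 0 U)) as [H1 H2].
    destruct (tail_status A) as [[|j] g|g] eqn:E.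
    + split; intros; try discriminate. inversion H; subst.
      rewrite (H2 0 g0) by (auto; lia). reflexivity.
    + split; intros; try discriminate. inversion H; subst.
      rewrite (H2 (S j0) g0) by (auto; lia). reflexivity.
    + split; intros; try discriminate. rewrite (H1 g) by auto. auto.
Qed.

Lemma tv_lift : forall A k, top_variant A -> top_variant (lift k A).
Proof. unfold top_variant; intros. apply (proj1 (ts_lift A k)); auto. Qed.
Lemma tv_subst : forall A k U, top_variant A -> top_variant (subst k U A).
Proof. unfold top_variant; intros. apply (proj1 (ts_subst A k U)); auto. Qed.

Definition shift k j := if j <? k then j else S j.
Definition adj i j := if j <? i then j else pred j.

Lemma proper_lift : forall A j k, proper j A -> proper (shift k j) (lift k A).
Proof.
  unfold shift. induction A; intros j k H; simpl in *.
  - nsimp; simpl; lia.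
  - destruct H as [[H1 H2]|H]; [left; split; auto| right; apply tv_lift; auto].
  - auto.
  - destruct H as [H|H]; [left | right].
    + specialize (IHA (S j) (S k) H).
      assert (E : (if S j <? S k then S j else S (S j)) = S (if j <? k then j else S j))
        by (nsimp; lia).
      rewrite E in IHA. exact IHA.
    + apply (tv_lift (Mu A) k H).
Qed.

Lemma proper_lift0 : forall A k, proper k (lift k A).
Proof.
  induction A; intros k; simpl.
  - nsimp; simpl; lia.
  - left; auto.
  - auto.
  - left; auto.
Qed.

Lemma proper_subst : forall C i U j, proper j C -> j <> i ->
  proper (adj i j) U -> proper (adj i j) (subst i U C).
Proof.
  unfold adj. induction C; intros i U j H Hji HU; simpl in *.
  - nsimp; subst; simpl; auto; nsimp; lia.
  - destruct H as [[H1 H2]|H]; [left; split; auto| right; apply tv_subst; auto].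
  - auto.
  - destruct H as [H|H]; [left | right].
    + assert (E : (if S j <? S i then S j else pred (S j)) = S (if j <? i then j else pred j)).
      { nsimp; lia. }
      specialize (IHC (S i) (lift 0 U) (S j) H ltac:(lia)).
      rewrite E in IHC. apply IHC.
      pose proof (proper_lift U _ 0 HU) as HL. unfold shift in HL. simpl in HL.
      exact HL.
    + apply (tv_subst (Mu C) i U H).
Qed.

Lemma wf_lift : forall A, wf A -> forall k, wf (lift k A).
Proof.
  induction 1; intros k; simpl; try constructor; auto.
  { destruct (n <? k); constructor. }
  pose proof (proper_lift a 0 (S k) H0) as HP. unfold shift in HP. simpl in HP. exact HP.
Qed.

Lemma wf_subst : forall C, wf C -> forall k U, wf U -> wf (subst k U C).
Proof.
  induction 1; intros k U HU; simpl.
  - nsimp; auto; constructor.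
  - constructor; auto.
  - constructor; auto.
  - constructor. apply IHwf. apply wf_lift; auto.
    pose proof (proper_subst a (S k) (lift 0 U) 0 H0 ltac:(lia)) as HP.
    unfold adj in HP. simpl in HP. apply HP. apply proper_lift0.
Qed.

Lemma wf_top : wf top.
Proof. constructor. constructor. constructor. simpl. auto. Qed.

Inductive tls := TF (j d : nat) | TR.
Definition tlL t := match t with TF j d => TF j (S d) | TR => TR end.
Definition tlM t := match t with TF 0 _ => TR | TF (S j) d => TF j d | TR => TR end.
Fixpoint tl A := match A with
  | Var j => TF j 0 | Arr _ b => tl b | Later a => tlL (tl a) | Mu a => tlM (tl a) end.
Definition tlift k t := match t with TF j d => TF (shift k j) d | TR => TR end.
Definition addd d t := match t with TF j d' => TF j (d + d') | TR => TR end.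
Definition tsub k s t := match t with
  | TF j d => if j =? k then addd d s else TF (adj k j) d | TR => TR end.

Lemma tl_lift : forall A k, tl (lift k A) = tlift k (tl A).
Proof.
  induction A; intros k; simpl.
  - destruct (Nat.ltb_spec n k); simpl; unfold shift; nsimp; try reflexivity; lia.
  - auto.
  - rewrite IHA. destruct (tl A); reflexivity.
  - rewrite IHA. destruct (tl A) as [[|j] d|]; simpl; auto; unfold shift; nsimp; try reflexivity; lia.

Qed.

Lemma tl_subst : forall C k U, tl (subst k U C) = tsub k (tl U) (tl C).
Proof.
  induction C; intros k U; simpl.
  - unfold adj; nsimp; simpl; unfold adj; nsimp; try lia; try reflexivity.
    destruct (tl U); reflexivity.
  - auto.
  - rewrite IHC. destruct (tl C) as [j d|]; simpl; auto.
    nsimp; simpl; auto. destruct (tl U); reflexivity.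
  - rewrite IHC. rewrite tl_lift.
    destruct (tl C) as [[|j] d|]; simpl; auto; unfold adj, shift; nsimp; simpl; try lia.
    + subst. destruct (tl U); simpl; reflexivity.
    + reflexivity.
    + destruct j; [lia|]. reflexivity.
Qed.

Lemma tl_unfold : forall m, tl (subst0 m (Mu m)) = tl (Mu m).
Proof.
  intros. unfold subst0. rewrite tl_subst. simpl.
  destruct (tl m) as [[|j] d|]; simpl; auto.
Qed.

Lemma ts_tl : forall X,
  (forall g, tail_status X = Resolved g -> tl X = TR) /\
  (forall j g, tail_status X = Free j g -> exists d, tl X = TF j d).
Proof.
  induction X; simpl.
  - split; intros; try discriminate. inversion H; subst; eauto.
  - auto.
  - destruct IHX as [H1 H2]. destruct (tail_status X) as [j g|g] eqn:E.
    + split; intros; try discriminate. inversion H; subst.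
      destruct (H2 j0 g) as [d Hd]; auto. rewrite Hd. simpl; eauto.
    + split; intros; try discriminate. rewrite (H1 g); auto.
  - destruct IHX as [H1 H2]. destruct (tail_status X) as [[|j] g|g] eqn:E.
    + split; intros; try discriminate. destruct (H2 0 g) as [d Hd]; auto.
      rewrite Hd; reflexivity.
    + split; intros; try discriminate. inversion H; subst.
      destruct (H2 (S j0) g0) as [d Hd]; auto. rewrite Hd; simpl; eauto.
    + split; intros; try discriminate. rewrite (H1 g); auto.
Qed.

Lemma tv_tl : forall X, top_variant X -> tl X = TR.
Proof. unfold top_variant; intros. apply (proj1 (ts_tl X) true); auto. Qed.

Lemma proper_tl : forall C k d, proper k C -> tl C = TF k d -> d <> 0.
Proof.
  induction C; intros k d H E; simpl in *.
  - inversion E; subst; lia.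
  - destruct H as [[H1 H2]|H]; eauto. rewrite (tv_tl _ H) in E; discriminate.
  - destruct (tl C); inversion E; lia.
  - destruct H as [H|H].
    + destruct (tl C) as [[|j] d'|] eqn:E'; inversion E; subst; eauto.
    + pose proof (tv_tl _ H) as T; simpl in T; rewrite T in E; discriminate.
Qed.

Fixpoint pt A : option nat := match A with
  | Var j => Some j | Arr _ _ => None | Later a => pt a
  | Mu a => match pt a with Some (S j) => Some j | _ => None end end.

Lemma pt_tl : forall A j, pt A = Some j -> exists d, tl A = TF j d.
Proof.
  induction A; intros j H; simpl in *; try discriminate.
  - inversion H; eauto.
  - destruct (IHA j H) as [d Hd]; rewrite Hd; simpl; eauto.
  - destruct (pt A) as [[|j']|] eqn:E; try discriminate. inversion H; subst.
    destruct (IHA (S j) eq_refl) as [d Hd]; rewrite Hd; simpl; eauto.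
Qed.

Lemma pt_subst : forall C k U, pt C <> Some k ->
  pt (subst k U C) = option_map (adj k) (pt C).
Proof.
  unfold adj. induction C; intros k U H; simpl in *.
  - nsimp; simpl; try congruence; reflexivity.
  - reflexivity.
  - auto.
  - destruct (pt C) as [[|j]|] eqn:E.
    + rewrite IHC by congruence. reflexivity.
    + rewrite IHC by congruence. simpl. nsimp; try lia; simpl.
      * reflexivity.
      * assert (j <> k) by congruence. destruct j; [lia|]. reflexivity.
    + rewrite IHC by congruence. reflexivity.
Qed.


Section T.
Variable dist : bool.
Notation teq := (teq dist).

Lemma teq_wf : forall X Y, teq X Y -> wf X /\ wf Y.
Proof.
  induction 1; intuition; try (constructor; auto; fail); try apply wf_top.
  all: try (constructor; auto; apply wf_top).
  all: try (inversion H; subst; apply wf_subst; auto).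
  all: try (constructor; constructor; auto).
Qed.

Lemma teq_lift : forall X Y, teq X Y -> forall k, teq (lift k X) (lift k Y).
Proof.
  induction 1; intros k; simpl.
  - constructor. apply wf_lift; auto.
  - apply teq_sym; auto.
  - eapply teq_trans; eauto.
  - apply teq_later; auto.
  - apply teq_arr; auto.
  - apply teq_arr_top. apply wf_lift; auto.
  - rewrite lift_unfold. apply (teq_unfold _ (lift (S k) A)).
    apply (wf_lift _ H (k)).
  - apply teq_fix.
    + apply wf_lift; auto.
    + apply wf_lift; auto.
    + pose proof (proper_lift C 0 (S k) H1) as P. unfold shift in P; simpl in P. exact P.
    + specialize (IHteq k). unfold subst0 in IHteq. rewrite lift_subst2 in IHteq by lia.
      exact IHteq.
  - apply teq_dist; auto; apply wf_lift; auto.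
Qed.

Lemma teq_subst : forall X Y, teq X Y -> forall k U, wf U -> teq (subst k U X) (subst k U Y).
Proof.
  induction 1; intros k U HU; simpl.
  - constructor. apply wf_subst; auto.
  - apply teq_sym; auto.
  - eapply teq_trans; eauto.
  - apply teq_later; auto.
  - apply teq_arr; auto.
  - apply teq_arr_top. apply wf_subst; auto.
  - rewrite subst_unfold. apply (teq_unfold _ (subst (S k) (lift 0 U) A)).
    apply (wf_subst _ H k U HU).
  - apply teq_fix.
    + apply wf_subst; auto.
    + apply wf_subst; auto. apply wf_lift; auto.
    + pose proof (proper_subst C (S k) (lift 0 U) 0 H1 ltac:(lia)) as P.
      unfold adj in P; simpl in P. apply P. apply proper_lift0.
    + specialize (IHteq k U HU). unfold subst0 in IHteq. rewrite subst_subst in IHteq by lia.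
      exact IHteq.
  - apply teq_dist; auto; apply wf_subst; auto.
Qed.

Lemma teq_top_later : teq top (Later top).
Proof. apply (teq_unfold _ (Later (Var 0))). apply wf_top. Qed.

Lemma teq_mu_cong : forall m1 m2, teq m1 m2 -> wf (Mu m1) -> wf (Mu m2) ->
  teq (Mu m1) (Mu m2).
Proof.
  intros m1 m2 H W1 W2. inversion W2; subst.
  apply teq_fix; auto.
  eapply teq_trans. apply teq_unfold; auto.
  apply teq_subst; auto.
Qed.

Lemma teq_cong : forall C, wf C -> forall k U U', teq U U' ->
  teq (subst k U C) (subst k U' C).
Proof.
  induction 1; intros k U U' HU; simpl;
    destruct (teq_wf _ _ HU) as [W1 W2].
  - destruct (n =? k); auto. destruct (n <? k); constructor; constructor.
  - apply teq_arr; auto.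
  - apply teq_later; auto.
  - apply teq_mu_cong.
    + apply IHwf. apply teq_lift; auto.
    + apply (wf_subst (Mu a) (wf_mu _ H H0) k U W1).
    + apply (wf_subst (Mu a) (wf_mu _ H H0) k U' W2).
Qed.

Lemma tl_teq : forall X Y, teq X Y -> tl X = tl Y.
Proof.
  induction 1; simpl; try congruence.
  - rewrite tl_unfold. reflexivity.
  - unfold subst0 in IHteq. rewrite tl_subst in IHteq. rewrite IHteq at 1.
    destruct (tl C) as [[|j] d|] eqn:E; simpl; auto.
    + destruct (tl A) as [j' d'|]; simpl in IHteq; [|reflexivity].
      exfalso. inversion IHteq. apply (proper_tl C 0 d H1 E). lia.
Qed.

Lemma teq_mu_top : forall m, wf (Mu m) -> teq m top -> teq (Mu m) top.
Proof.
  intros m W H. eapply teq_trans. apply teq_unfold; auto.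
  rewrite <- (subst_top 0 (Mu m)). apply teq_subst; auto.
Qed.

Lemma teq_arr_top' : forall a b, wf a -> teq b top -> teq (Arr a b) top.
Proof.
  intros. eapply teq_trans. apply teq_arr. constructor; auto. eauto.
  apply teq_arr_top; auto.
Qed.

Lemma top_lemma : forall C, wf C ->
  (tl C = TR -> teq C top) /\
  (forall k d U, tl C = TF k d -> wf U -> teq U top -> teq (subst k U C) top).
Proof.
  induction 1; simpl.
  - split; intros; try discriminate. inversion H; subst.
    rewrite Nat.eqb_refl. auto.
  - destruct IHwf2 as [H1 H2]. split; intros.
    + apply teq_arr_top'; auto.
    + apply teq_arr_top'. apply wf_subst; auto. eauto.
  - destruct IHwf as [H1 H2]. split; intros.
    + destruct (tl a) eqn:E; try discriminate.
      eapply teq_trans. apply teq_later; auto. apply teq_sym, teq_top_later.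
    + destruct (tl a) eqn:E; try discriminate. inversion H0; subst.
      eapply teq_trans. apply teq_later; eauto. apply teq_sym, teq_top_later.
  - destruct IHwf as [H1 H2]. split; intros.
    + destruct (tl a) as [[|j] d|] eqn:E; try discriminate.
      * apply teq_sym. apply teq_fix; auto. apply wf_top.
        apply teq_sym. apply (H2 0 d top); auto using wf_top. constructor; apply wf_top.
      * apply teq_mu_top; auto. constructor; auto.
    + destruct (tl a) as [[|j] d'|] eqn:E; try discriminate. inversion H3; subst.
      apply teq_mu_top.
      * apply (wf_subst (Mu a) (wf_mu _ H H0) k U H4).
      * apply (H2 (S k) d (lift 0 U)); auto. apply wf_lift; auto.
        rewrite <- (lift_top 0). apply teq_lift; auto.
Qed.

Lemma top_teq : forall C, wf C -> tl C = TR -> teq C top.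
Proof. intros. apply (top_lemma C H); auto. Qed.

End T.


Section D.
Variable dist : bool.
Notation teq := (teq dist).

Lemma subst_var : forall n k U, n <> k -> exists m, subst k U (Var n) = Var m.
Proof.
  intros. simpl. destruct (Nat.eqb_spec n k); [lia|]. destruct (n <? k); eauto.
Qed.

Lemma tl_top : tl top = TR.
Proof. reflexivity. Qed.

Lemma tl_subst_teq : forall C k U U', teq U U' -> tl (subst k U C) = tl (subst k U' C).
Proof.
  intros. rewrite !tl_subst. rewrite (tl_teq _ _ _ H). reflexivity.
Qed.

Inductive Dl : ty -> ty -> Prop :=
| Dl_later a : Dl (Later a) a
| Dl_mu m W : Dl (subst0 m (Mu m)) W -> Dl (Mu m) W
| Dl_top X : tl X = TR -> Dl X top
| Dl_arr a b a' b' : dist = true -> Dl a a' -> Dl b b' -> Dl (Arr a b) (Arr a' b').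

Lemma Dl_tl : forall X X', Dl X X' -> tl X = tlL (tl X').
Proof.
  induction 1; simpl; auto.
  - rewrite <- IHDl, tl_unfold. reflexivity.
Qed.

Lemma Dl_wf : forall X X', Dl X X' -> wf X -> wf X'.
Proof.
  induction 1; intros HW.
  - inversion HW; auto.
  - apply IHDl. inversion HW; subst. apply wf_subst; auto.
  - apply wf_top.
  - inversion HW; subst. constructor; auto.
Qed.

Lemma Dl_top_teq : forall X X', Dl X X' -> wf X -> tl X = TR -> teq X' top.
Proof.
  intros. apply top_teq. eapply Dl_wf; eauto.
  rewrite (Dl_tl _ _ H) in H1. destruct (tl X'); simpl in H1; auto; discriminate.
Qed.

Definition IDl X Y := forall X', Dl X X' -> exists Y', Dl Y Y' /\ teq X' Y'.

Lemma IDl_top : forall X Y, wf X -> tl X = TR -> tl Y = TR -> IDl X Y.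
Proof.
  intros X Y W T1 T2 X' H. exists top. split. apply Dl_top; auto.
  eapply Dl_top_teq; eauto.
Qed.

Lemma Dl_subst : forall U U', teq U U' -> forall Z W, Dl Z W ->
  forall k C, Z = subst k U C -> wf C -> proper k C ->
  exists W', Dl (subst k U' C) W' /\ teq W W'.
Proof.
  intros U U' HU. destruct (teq_wf _ _ _ HU) as [WU WU'].
  induction 1; intros k C EZ WC PC;
  (destruct (tl (subst k U C)) eqn:T;
   [| exists top; split;
      [ apply Dl_top; rewrite <- (tl_subst_teq C k U U' HU); auto
      | apply (Dl_top_teq (subst k U C));
          [ rewrite <- EZ; econstructor; eauto | apply wf_subst; auto | auto ] ] ]).
  - destruct C; simpl in PC;
      try (destruct (subst_var n k U PC) as [m Em]; rewrite Em in EZ); try discriminate.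
    simpl in EZ. inversion EZ; subst. exists (subst k U' C). split.
    + simpl. constructor.
    + inversion WC; subst. apply teq_cong; auto.
  - destruct C; simpl in PC;
      try (destruct (subst_var n k U PC) as [m0 Em]; rewrite Em in EZ); try discriminate.
    simpl in EZ. inversion EZ; subst. inversion WC; subst.
    destruct PC as [PC|PC].
    + destruct (IHDl k (subst0 C (Mu C))) as [W' [HW1 HW2]].
      * symmetry; apply subst_unfold.
      * apply wf_subst; auto.
      * pose proof (proper_subst C 0 (Mu C) (S k) PC ltac:(lia)) as P.
        unfold adj in P; simpl in P. apply P. simpl. auto.
      * exists W'. split; auto. simpl. constructor. rewrite <- subst_unfold. auto.
    + exfalso. pose proof (tv_tl _ (tv_subst _ k U PC)) as T'. simpl in T'.
      simpl in T. rewrite T in T'. discriminate.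
  - rewrite <- EZ in T. rewrite H in T. discriminate.
  - destruct C; simpl in PC;
      try (destruct (subst_var n k U PC) as [m0 Em]; rewrite Em in EZ); try discriminate.
    simpl in EZ. inversion EZ; subst. inversion WC; subst.
    destruct PC as [[P1 P2]|PC].
    + destruct (IHDl1 k C1) as [A1 [H11 H12]]; auto.
      destruct (IHDl2 k C2) as [A2 [H21 H22]]; auto.
      exists (Arr A1 A2). split. simpl. constructor; auto. apply teq_arr; auto.
    + exfalso. pose proof (tv_tl _ (tv_subst _ k U PC)) as T'.
      simpl in T. rewrite T in T'. discriminate.
Qed.

Lemma Dl_later_inv : forall a a', Dl (Later a) a' -> wf a -> teq a' a.
Proof.
  intros a a' H W. inversion H; subst.
  - constructor; auto.
  - apply teq_sym. apply top_teq; auto. simpl in H0. destruct (tl a); simpl in *; auto; discriminate.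
Qed.

Lemma IDl_teq : forall X Y, teq X Y -> IDl X Y /\ IDl Y X.
Proof.
  induction 1.
  - split; intros X' HX; exists X'; split; auto; constructor; eapply Dl_wf; eauto.
  - tauto.
  - destruct IHteq1, IHteq2. split; intros X' HX.
    + destruct (H1 X' HX) as [Y1 [HY1 E1]]. destruct (H3 Y1 HY1) as [Y2 [HY2 E2]].
      exists Y2; split; auto. eapply teq_trans; eauto.
    + destruct (H4 X' HX) as [Y1 [HY1 E1]]. destruct (H2 Y1 HY1) as [Y2 [HY2 E2]].
      exists Y2; split; auto. eapply teq_trans; eauto.
  - destruct (teq_wf _ _ _ H) as [WA WB]. pose proof (tl_teq _ _ _ H) as T.
    split; intros X' HX; inversion HX; subst.
    + exists B; split; [constructor | auto].
    + exists top; split; [apply Dl_top; simpl; rewrite <- T; auto | constructor; apply wf_top].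
    + exists A; split; [constructor | apply teq_sym; auto].
    + exists top; split; [apply Dl_top; simpl; rewrite T; auto | constructor; apply wf_top].
  - destruct (teq_wf _ _ _ H) as [WA WC]. destruct (teq_wf _ _ _ H0) as [WB WD].
    pose proof (tl_teq _ _ _ H0) as T.
    destruct IHteq1 as [I1 I2], IHteq2 as [I3 I4].
    split; intros X' HX; inversion HX; subst.
    + exists top; split; [apply Dl_top; simpl; rewrite <- T; auto | constructor; apply wf_top].
    + edestruct I1 as [C' [HC1 HC2]]; [eassumption|]. edestruct I3 as [D' [HD1 HD2]]; [eassumption|].
      exists (Arr C' D'); split; [constructor; auto | apply teq_arr; auto].
    + exists top; split; [apply Dl_top; simpl; rewrite T; auto | constructor; apply wf_top].
    + edestruct I2 as [C' [HC1 HC2]]; [eassumption|]. edestruct I4 as [D' [HD1 HD2]]; [eassumption|].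
      exists (Arr C' D'); split; [constructor; auto | apply teq_arr; auto].
  - exact (conj (IDl_top (Arr A top) top (wf_arr _ _ H wf_top) eq_refl eq_refl)
                (IDl_top top (Arr A top) wf_top eq_refl eq_refl)).
  - split; intros X' HX.
    + inversion HX; subst.
      * exists X'; split; auto. constructor. eapply Dl_wf; eauto. inversion H; subst.
        apply wf_subst; auto.
      * exists top; split; [apply Dl_top; rewrite tl_unfold; auto | constructor; apply wf_top].
    + exists X'; split. constructor; auto. constructor. eapply Dl_wf; eauto.
      inversion H; subst. apply wf_subst; auto.
  - assert (HF : teq A (Mu C)) by (apply teq_fix; auto).
    assert (WM : wf (Mu C)) by (constructor; auto).
    destruct IHteq as [I1 I2]. split; intros X' HX.
    + destruct (I1 _ HX) as [W [HW1 HW2]].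
      destruct (Dl_subst A (Mu C) HF _ _ HW1 0 C eq_refl H0 H1) as [W' [HW1' HW2']].
      exists W'; split. constructor; auto. eapply teq_trans; eauto.
    + inversion HX; subst.
      * match goal with Hd : Dl (subst0 C (Mu C)) X' |- _ =>
        destruct (Dl_subst (Mu C) A (teq_sym _ _ _ HF) _ _ Hd 0 C eq_refl H0 H1)
          as [W' [HW1' HW2']] end.
        destruct (I2 _ HW1') as [Y' [HY1 HY2]].
        exists Y'; split; auto. eapply teq_trans; eauto.
      * exists top; split; [apply Dl_top | constructor; apply wf_top].
        rewrite (tl_teq _ _ _ HF); auto.
  - split; intros X' HX.
    + inversion HX; subst.
      * exists (Arr A B); split. constructor; auto; constructor. constructor; constructor; auto.
      * exists top; split; [apply Dl_top; simpl in *; auto | constructor; apply wf_top].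
    + inversion HX; subst.
      * exists top; split; [apply Dl_top; simpl in *; auto | constructor; apply wf_top].
      * exists (Arr A B); split. constructor. apply teq_arr; apply Dl_later_inv; auto.
Qed.

End D.


Section A.
Variable dist : bool.
Notation teq := (teq dist).

Inductive Ar : ty -> ty -> ty -> Prop :=
| Ar_arr a b : Ar (Arr a b) a b
| Ar_mu m a b : Ar (subst0 m (Mu m)) a b -> Ar (Mu m) a b
| Ar_top X a : tl X = TR -> wf a -> Ar X a top
| Ar_later x a b : dist = true -> Ar x a b -> Ar (Later x) (Later a) (Later b).

Lemma Ar_tl : forall X a b, Ar X a b -> tl X = tl b.
Proof.
  induction 1; simpl; auto.
  - rewrite <- IHAr, tl_unfold. reflexivity.
  - rewrite IHAr; reflexivity.
Qed.

Lemma Ar_wf : forall X a b, Ar X a b -> wf X -> wf a /\ wf b.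
Proof.
  induction 1; intros HW.
  - inversion HW; auto.
  - apply IHAr. inversion HW; subst. apply wf_subst; auto.
  - split; auto; apply wf_top.
  - inversion HW; subst. destruct IHAr; auto. split; constructor; auto.
Qed.

Definition IAr X Y := forall a b, Ar X a b -> exists c d, Ar Y c d /\ teq a c /\ teq b d.

Lemma IAr_top : forall X Y, wf X -> tl X = TR -> tl Y = TR -> IAr X Y.
Proof.
  intros X Y W T1 T2 a b H. destruct (Ar_wf _ _ _ H W) as [Wa Wb].
  exists a, top. split. apply Ar_top; auto. split. constructor; auto.
  apply top_teq; auto. rewrite <- (Ar_tl _ _ _ H); auto.
Qed.

Lemma IAr_split : forall X Y, teq X Y -> (tl X <> TR -> IAr X Y /\ IAr Y X) ->
  IAr X Y /\ IAr Y X.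
Proof.
  intros X Y H K. destruct (teq_wf _ _ _ H) as [W1 W2]. pose proof (tl_teq _ _ _ H) as T.
  destruct (tl X) eqn:E.
  - apply K. discriminate.
  - split; apply IAr_top; auto.
Qed.

Lemma Ar_subst : forall U U', teq U U' -> forall Z a b, Ar Z a b ->
  forall k C, Z = subst k U C -> wf C -> tl Z <> TR -> pt C <> Some k ->
  exists e f, Ar (subst k U' C) e f /\ teq a e /\ teq b f.
Proof.
  intros U U' HU. destruct (teq_wf _ _ _ HU) as [WU WU'].
  induction 1; intros k C EZ WC NT NP.
  - destruct C; simpl in NP;
      try (assert (n <> k) by congruence;
           destruct (subst_var n k U ltac:(auto)) as [m Em]; rewrite Em in EZ); try discriminate.
    simpl in EZ. inversion EZ; subst. inversion WC; subst.
    exists (subst k U' C1), (subst k U' C2). split. simpl; constructor.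
    split; apply teq_cong; auto.
  - destruct C; simpl in NP;
      try (assert (n <> k) by congruence;
           destruct (subst_var n k U ltac:(auto)) as [m0 Em]; rewrite Em in EZ); try discriminate.
    simpl in EZ. inversion EZ; subst. inversion WC; subst.
    assert (NP' : pt (subst0 C (Mu C)) <> Some k).
    { destruct (pt C) as [[|j]|] eqn:E.
      - exfalso. destruct (pt_tl _ _ E) as [d Hd]. apply NT.
        change (tl (subst k U (Mu C)) = TR). rewrite tl_subst. simpl. rewrite Hd. reflexivity.
      - unfold subst0. rewrite pt_subst by congruence. rewrite E. simpl. unfold adj. simpl. 
        congruence.
      - unfold subst0. rewrite pt_subst by congruence. rewrite E. simpl. congruence. }
    destruct (IHAr k (subst0 C (Mu C))) as [e [f [K1 [K2 K3]]]].
    + symmetry; apply subst_unfold.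
    + apply wf_subst; auto.
    + rewrite tl_unfold. auto.
    + auto.
    + exists e, f. split; auto. simpl. constructor. rewrite <- subst_unfold. auto.
  - exfalso. apply NT. subst. auto.
  - destruct C; simpl in NP;
      try (assert (n <> k) by congruence;
           destruct (subst_var n k U ltac:(auto)) as [m0 Em]; rewrite Em in EZ); try discriminate.
    simpl in EZ. inversion EZ; subst. inversion WC; subst.
    destruct (IHAr k C) as [e [f [K1 [K2 K3]]]]; auto.
    + intro T. apply NT. simpl. rewrite T. reflexivity.
    + exists (Later e), (Later f). split. simpl. constructor; auto.
      split; apply teq_later; auto.
Qed.

Lemma IAr_teq : forall X Y, teq X Y -> IAr X Y /\ IAr Y X.
Proof.
  intros X Y HXY. induction HXY; (apply IAr_split; [ | intro NT ]).
  - constructor; auto.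
  - split; intros a b H'; exists a, b; split; auto;
      destruct (Ar_wf _ _ _ H' H); split; constructor; auto.
  - apply teq_sym; auto.
  - tauto.
  - eapply teq_trans; eauto.
  - destruct IHHXY1, IHHXY2. split; intros a b HX.
    + destruct (H a b HX) as [c [d [H3 [H4 H5]]]].
      destruct (H1 c d H3) as [e [f [H6 [H7 H8]]]].
      exists e, f. split; auto. split; eapply teq_trans; eauto.
    + destruct (H2 a b HX) as [c [d [H3 [H4 H5]]]].
      destruct (H0 c d H3) as [e [f [H6 [H7 H8]]]].
      exists e, f. split; auto. split; eapply teq_trans; eauto.
  - apply teq_later; auto.
  - destruct IHHXY as [I1 I2]. split; intros a b HX; inversion HX; subst.
    + exfalso; auto.
    + edestruct I1 as [c [d [H4 [H5 H6]]]]; [eassumption|].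
      exists (Later c), (Later d). split. constructor; auto. split; apply teq_later; auto.
    + exfalso. apply NT. simpl in *. rewrite (tl_teq _ _ _ HXY). auto.
    + edestruct I2 as [c [d [H4 [H5 H6]]]]; [eassumption|].
      exists (Later c), (Later d). split. constructor; auto. split; apply teq_later; auto.
  - apply teq_arr; auto.
  - split; intros a b HX; inversion HX; subst.
    + exists C, D. split. constructor. auto.
    + exfalso; auto.
    + exists A, B. split. constructor. split; apply teq_sym; auto.
    + exfalso. apply NT. simpl. rewrite (tl_teq _ _ _ HXY2). auto.
  - apply teq_arr_top; auto.
  - exfalso. apply NT. reflexivity.
  - apply teq_unfold; auto.
  - split; intros a b HX.
    + inversion HX; subst.
      * exists a, b. split; auto. destruct (Ar_wf _ _ _ HX H) as [Wa Wb].
        split; constructor; auto.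
      * exfalso; auto.
    + exists a, b. split. constructor; auto.
      destruct (Ar_wf _ _ _ HX) as [Wa Wb]. inversion H; subst. apply wf_subst; auto.
      split; constructor; auto.
  - apply teq_fix; auto.
  - assert (HF : teq A (Mu C)) by (apply teq_fix; auto).
    pose proof (tl_teq _ _ _ HF) as T1. pose proof (tl_teq _ _ _ HXY) as T2.
    assert (NP : pt C <> Some 0).
    { intro E. destruct (pt_tl _ _ E) as [d Hd]. apply NT. rewrite T1. simpl.
      rewrite Hd. reflexivity. }
    destruct IHHXY as [I1 I2]. split; intros a b HX.
    + destruct (I1 _ _ HX) as [c [d [H3 [H4 H5]]]].
      destruct (Ar_subst A (Mu C) HF _ _ _ H3 0 C eq_refl H0 ltac:(rewrite <- T2; auto) NP)
        as [e [f [H6 [H7 H8]]]].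
      exists e, f. split. constructor; auto. split; eapply teq_trans; eauto.
    + inversion HX; subst.
      * assert (NT' : tl (subst0 C (Mu C)) <> TR).
        { rewrite tl_unfold. rewrite <- T1. auto. }
        match goal with Hd : Ar (subst0 C (Mu C)) a b |- _ =>
        destruct (Ar_subst (Mu C) A (teq_sym _ _ _ HF) _ _ _ Hd 0 C eq_refl H0 NT' NP)
          as [e [f [H6 [H7 H8]]]] end.
        destruct (I2 _ _ H6) as [c [d [H9 [H10 H11]]]].
        exists c, d. split; auto. split; eapply teq_trans; eauto.
      * exfalso. apply NT. rewrite T1. auto.
  - apply teq_dist; auto.
  - split; intros a b HX; inversion HX; subst.
    + exfalso; auto.
    + match goal with Hd : Ar (Arr A B) a0 b0 |- _ => inversion Hd; subst end.
      * eexists _, _. split. apply Ar_arr. split; constructor; constructor; auto.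
      * exfalso. apply NT. simpl in *. match goal with Ht : tl B = TR |- _ => rewrite Ht end. reflexivity.
    + exists (Later A), (Later B). split. constructor; auto. constructor.
      split; constructor; constructor; auto.
    + exfalso. apply NT. simpl in *. assumption.
Qed.

End A.

Theorem proposition4 :
  forall (dist : bool) (A B C D : ty),
    wf A -> wf B -> wf C -> wf D ->
    (teq dist (Later A) (Later B) <-> teq dist A B) /\
    (teq dist (Arr A B) (Arr C D) <->
       ((teq dist A C /\ teq dist B D) \/
        (teq dist B D /\ teq dist D top))).
Proof.
  intros dist A B C D WA WB WC WD. split; split.
  - intro H. destruct (IDl_teq dist _ _ H) as [I1 _].
    destruct (I1 A (Dl_later dist A)) as [Y' [HY HE]].
    inversion HY; subst; auto.
    apply teq_trans with top; auto. apply teq_sym. apply top_teq; auto.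
    simpl in H0. destruct (tl B); simpl in *; auto; discriminate.
  - apply teq_later.
  - intro H. destruct (IAr_teq dist _ _ H) as [I1 _].
    destruct (I1 A B (Ar_arr dist A B)) as [c [d [HA [H1 H2]]]].
    inversion HA; subst.
    + left; auto.
    + right. assert (TD : teq dist D top) by (apply top_teq; auto).
      split; auto. eapply teq_trans; eauto. apply teq_sym; auto.
  - intros [[H1 H2]|[H1 H2]].
    + apply teq_arr; auto.
    + apply teq_trans with top.
      * apply teq_arr_top'; auto. eapply teq_trans; eauto.
      * apply teq_sym. apply teq_arr_top'; auto.
Qed.
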